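(* Let $n\ge2$ and $n\in\{p,p+1\}$ for a prime $p$. Then: (i) $p$ is an isolated vertex of $\mathcal O_0(S_n)$, and the type $[1^{n-p},p]$ is an isolated vertex of $P_0(\mathcal T(S_n))$; (ii) every vertex $[\psi]$ of $\widetilde P_0(S_n)$ with $o(\psi)=p$ is isolated in $\widetilde P_0(S_n)$; (iii) the number of components of $\widetilde P_0(S_n)$ containing vertices of order $p$ is $(p-2)!$ if $n=p$ and $(p+1)(p-2)!$ if $n=p+1$.
   Context: $\widetilde P_0(G)$: vertex set $\{[x]:x\in G\setminus\{1\}\}$ with $[x]=\{y:\langle y\rangle=\langle x\rangle\}$, distinct $[x],[y]$ adjacent iff some representatives are one a positive power of the other. $\mathcal O_0(G)$: vertices the element orders $\ne1$, distinct $m,m'$ adjacent iff one divides the other. For $\psi\in S_n$, $T_\psi$ is the partition of $n$ given by orbit lengths of $\langle\psi\rangle$; for $T=[m_1^{t_1},\dots,m_k^{t_k}]$, $T^a=[(m_i/\gcd(a,m_i))^{t_i\gcd(a,m_i)}]_i$. $P_0(\mathcal T(S_n))$: vertices the partitions of $n$ other than $[1^n]$, distinct $T,T'$ adjacent iff one is a power of the other. *)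

(* Defs.v *)
From mathcomp Require Import all_boot all_order all_fingroup.
Set Implicit Arguments. Unset Strict Implicit. Unset Printing Implicit Defensive.
Local Open Scope group_scope.

Section RPG.
Variable gT : finGroupType.

Definition cls (x : gT) : {set gT} := [set y | <[y]> == <[x]>].

Definition rpg_vertices : {set {set gT}} := [set cls x | x in [set~ 1]].

(* distinct [x],[y] adjacent iff some representatives are one a positive
   power of the other; in a finite group "a is a positive power of b" is
   exactly a \in <[b]>. *)
Definition rpg_adj : rel {set gT} := fun A B =>
  [&& A \in rpg_vertices, B \in rpg_vertices, A != B &
      [exists a in A, exists b in B, (a \in <[b]>) || (b \in <[a]>)]].

Definition rpg_isolated (A : {set gT}) : Prop :=
  A \in rpg_vertices /\ forall B, ~~ rpg_adj A B.

Definition rpg_components : {set {set {set gT}}} :=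
  [set [set B | connect rpg_adj A B] | A in rpg_vertices].

Definition rpg_ncomp_order (m : nat) : nat :=
  #|[set C in rpg_components |
       [exists x : gT, [&& x != 1, #[x] == m & cls x \in C]]]|.

Definition og_vertex (m : nat) : Prop := (exists x : gT, #[x] = m) /\ m <> 1%N.

Definition og_adj (m m' : nat) : Prop := m <> m' /\ (m %| m' \/ m' %| m).

Definition og_isolated (m : nat) : Prop :=
  og_vertex m /\ forall m', og_vertex m' -> ~ og_adj m m'.
End RPG.
Local Close Scope group_scope.

Definition is_partition (n : nat) (T : seq nat) : Prop :=
  sorted geq T /\ all (fun m => 0 < m) T /\ sumn T = n.

Definition tpow (T : seq nat) (a : nat) : seq nat :=
  sort geq (flatten [seq nseq (gcdn a m) (m %/ gcdn a m) | m <- T]).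

Definition tg_vertex (n : nat) (T : seq nat) : Prop :=
  is_partition n T /\ T <> nseq n 1.

Definition tg_adj (T T' : seq nat) : Prop :=
  T <> T' /\ ((exists a, T' = tpow T a) \/ (exists a, T = tpow T' a)).

Definition tg_isolated (n : nat) (T : seq nat) : Prop :=
  tg_vertex n T /\ forall T', tg_vertex n T' -> ~ tg_adj T T'.

(* Main.v *)
Require Import Defs.
From mathcomp Require Import all_boot all_order all_fingroup all_solvable.
From mathcomp Require Import zify.
Set Implicit Arguments. Unset Strict Implicit. Unset Printing Implicit Defensive.
Open Scope group_scope.

Section Core.
Variables (n p : nat).
Hypothesis hp : prime p.
Hypothesis hnp : (n <= p.+1)%N.
Local Notation G := {perm 'I_n}.

Lemma fixX (y : G) x m : y x = x -> (y ^+ m) x = x.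
Proof. by move=> hx; rewrite permX; elim: m => //= m ->. Qed.

Lemma powM (c : G) x i j : (c ^+ j) ((c ^+ i) x) = (c ^+ (i + j)) x.
Proof. by rewrite expgD permM. Qed.

Lemma gen_prime (c : G) k : #[c] = p -> (0 < k < p)%N -> c \in <[c ^+ k]>.
Proof.
move=> oc /andP[k0 kp].
have ok : #[c ^+ k] = p.
  rewrite orderXgcd oc.
  have : coprime p k by rewrite prime_coprime // gtnNdvd.
  by rewrite /coprime => /eqP ->; rewrite divn1.
have e : <[c ^+ k]> = <[c]>.
  apply/eqP; rewrite eqEcard cycleX /= -!orderE ok oc leqnn.
  done.
by rewrite e cycle_id.
Qed.

Lemma iter_inj (c : G) x0 : #[c] = p -> c x0 != x0 ->
  forall i j, (i < p)%N -> (j < p)%N -> (c ^+ i) x0 = (c ^+ j) x0 -> i = j.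
Proof.
move=> oc cx0.
suff H : forall i j, (i < j)%N -> (j < p)%N -> (c ^+ i) x0 = (c ^+ j) x0 -> False.
  move=> i j ip jp e; case: (ltngtP i j) => // h.
  - by case: (H _ _ h jp e).
  - by case: (H _ _ h ip (esym e)).
move=> i j ij jp e.
have hj : j = (i + (j - i))%N by rewrite subnKC // ltnW.
move: e; rewrite hj -powM => e.
have : c \in <[c ^+ (j - i)]> by apply: gen_prime => //; rewrite subn_gt0 ij /= (leq_ltn_trans (leq_subr _ _) jp).
case/cycleP => m em.
have fy : c ((c ^+ i) x0) = (c ^+ i) x0 by rewrite {1}em; apply: fixX; rewrite -e.
move: fy; rewrite -permM -expgSr expgS permM.
move=> /perm_inj.
by move/eqP; rewrite (negbTE cx0).
Qed.

Definition Sx (c : G) x0 : {set 'I_n} := [set (c ^+ (nat_of_ord i)) x0 | i : 'I_p].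

Lemma p_gt0 : (0 < p)%N. Proof. exact: prime_gt0. Qed.

Lemma memS (c : G) x0 m : #[c] = p -> (c ^+ m) x0 \in Sx c x0.
Proof.
move=> oc; rewrite -expg_mod_order oc.
by apply/imsetP; exists (Ordinal (ltn_pmod m p_gt0)).
Qed.

Lemma cardS (c : G) x0 : #[c] = p -> c x0 != x0 -> #|Sx c x0| = p.
Proof.
move=> oc cx0; rewrite card_imset ?card_ord // => i j /(iter_inj oc cx0 (ltn_ord i) (ltn_ord j)).
exact: val_inj.
Qed.

Lemma compl (c : G) x0 z w : #[c] = p -> c x0 != x0 ->
  z \notin Sx c x0 -> w \notin Sx c x0 -> z = w.
Proof.
move=> oc cx0 zS wS; apply/eqP; apply/negPn/negP => zw.
have : #|[set z; w]| <= #|~: Sx c x0|.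
  by apply: subset_leq_card; apply/subsetP => u; rewrite !inE => /orP[]/eqP ->; rewrite ?inE.
rewrite cards2 zw.
have e1 := cardsC (Sx c x0); rewrite card_ord cardS // in e1.
move: hnp e1 (prime_gt1 hp); lia.
Qed.

Lemma cp1 (c : G) z : #[c] = p -> (c ^+ p.-1) (c z) = z.
Proof.
move=> oc; rewrite -permM -expgS prednK ?p_gt0 // -oc expg_order perm1 //.
Qed.

Lemma outfix (c : G) x0 z : #[c] = p -> c x0 != x0 -> z \notin Sx c x0 -> c z = z.
Proof.
move=> oc cx0 zS; apply: (compl oc cx0) => //.
apply/negP => /imsetP[i _ e]; move: zS.
by rewrite -(cp1 z oc) e powM memS.
Qed.

Lemma exists_moved (c : G) : #[c] = p -> exists x0, c x0 != x0.
Proof.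
move=> oc; case: (boolP [exists x, c x != x]) => [/existsP//|/existsPn h].
have c1 : c = 1 by apply/permP => x; rewrite perm1; apply/eqP; move: (h x); rewrite negbK.
by move: (prime_gt1 hp); rewrite -oc c1 order1.
Qed.

Lemma cent (b c : G) : #[c] = p -> commute b c -> b \in <[c]>.
Proof.
move=> oc cbc; have [x0 cx0] := exists_moved oc.
have bS : b x0 \in Sx c x0.
  apply/negPn/negP => h; have := outfix oc cx0 h.
  rewrite -permM cbc permM => /perm_inj e.
  by move: cx0; rewrite e eqxx.
case/imsetP: bS => j _ ej.
have key : forall i, b ((c ^+ i) x0) = (c ^+ j) ((c ^+ i) x0).
  move=> i; have ci : commute b (c ^+ i) by apply: commuteX.
  by rewrite -permM -ci permM ej !powM addnC.
apply/cycleP; exists j; apply/permP => z.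
case: (boolP (z \in Sx c x0)) => [/imsetP[i _ ->]|zS]; first exact: key.
rewrite (fixX _ (outfix oc cx0 zS)).
apply: (compl oc cx0) => //.
apply/negP => /imsetP[i _ e].
have : b ((c ^+ (i + (p - j))) x0) = b z.
  rewrite key powM e -addnA subnK; last exact: ltnW.
  have cp : c ^+ p = 1 by rewrite -oc expg_order.
  by rewrite expgD cp mulg1.
move/perm_inj => ez; move: zS; by rewrite -ez memS.
Qed.

Lemma ordp (b : G) : (p %| #[b])%N -> #[b] = p.
Proof.
move=> pb; set c := b ^+ (#[b] %/ p).
have ek := divnK pb.
have k0 : (0 < #[b] %/ p)%N.
  by rewrite divn_gt0 ?prime_gt0 // dvdn_leq.
have oc : #[c] = p.
  rewrite /c orderXdiv ?dvdn_div //.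
  by rewrite -{1}ek mulKn.
have : b \in <[c]> by apply: cent => //; apply: commuteX.
rewrite -cycle_subG => /subset_leq_card; rewrite -!orderE oc => h.
by apply/eqP; rewrite eqn_leq h dvdn_leq.
Qed.
End Core.

Section C0.
Variables (n p : nat).
Hypothesis hp : prime p.
Hypothesis hnp : (n <= p.+1)%N.
Hypothesis hpn : (p <= n)%N.
Local Notation G := {perm 'I_n}.

Definition f0 (i : 'I_n) : 'I_n :=
  if (i < p)%N then Ordinal (leq_trans (ltn_pmod i.+1 (p_gt0 hp)) hpn) else i.

Lemma modS i : (i < p)%N -> (i.+1 %% p = if i.+1 == p then 0 else i.+1)%N.
Proof.
move=> ip; case: (ltngtP i.+1 p) => h.
- by rewrite modn_small.
- by move: ip h; lia.
- by rewrite h modnn.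

Qed.

Lemma f0_inj : injective f0.
Proof.
move=> i j; rewrite /f0.
have p1 := prime_gt1 hp.
case: ifP => ip; case: ifP => jp.
- move=> /(congr1 val) /= e; apply: val_inj => /=.
  move: e; rewrite !modS // => e; move: e ip jp p1; case: eqP; case: eqP; lia.
- move/(congr1 val) => /= e; have := ltn_pmod i.+1 (p_gt0 hp); by rewrite e jp.
- move/(congr1 val) => /= e; have := ltn_pmod j.+1 (p_gt0 hp); by rewrite -e ip.
- done.
Qed.

Definition c0 : G := perm f0_inj.

Lemma c0X k (i : 'I_n) : nat_of_ord ((c0 ^+ k) i) = if (i < p)%N then ((i + k) %% p)%N else nat_of_ord i.
Proof.
elim: k => [|k IH].
  rewrite expg0 perm1 addn0; case: ifP => // ip; by rewrite modn_small.
have e1 : ((c0 ^+ k) i < p)%N = (i < p)%N.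
  by rewrite IH; case: ifP => // _; rewrite ltn_pmod // p_gt0.
rewrite expgSr permM {2}/c0 permE /f0 e1.
case: ifP => ip /=; rewrite IH ip //.
by rewrite -addn1 modnDml addn1 addnS.
Qed.

Lemma ord_c0 : #[c0] = p.
Proof.
have : (#[c0] %| p)%N.
  rewrite order_dvdn; apply/eqP/permP => i; apply: ord_inj.
  rewrite c0X perm1; case: ifP => // ip.
  by rewrite modnDr modn_small.
case/primeP: hp => p1 /[apply] /orP[] /eqP // o1.
have : c0 = 1 by apply/eqP; rewrite -order_eq1 o1.
move/(congr1 (fun g : G => nat_of_ord (g (Ordinal (leq_trans (p_gt0 hp) hpn))))).
have := c0X 1 (Ordinal (leq_trans (p_gt0 hp) hpn)).
rewrite expg1 /= => ->; rewrite perm1 /= p_gt0 // modn_small //.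
Qed.

Lemma conj_c0 (d : G) : #[d] = p -> exists g : G, d = c0 ^ g.
Proof.
move=> od; have [y0 dy0] := exists_moved hp od.
set S := Sx p d y0.
set w := odflt y0 [pick z | z \notin S].
have wS : (p < n)%N -> w \notin S.
  move=> pn; rewrite /w; case: pickP => [z // | none].
  have : (#|'I_n| <= #|S|)%N.
    apply: subset_leq_card; apply/subsetP => z _; move: (none z) => /negbFE //.
  rewrite card_ord cardS //; move: pn; lia.
pose gf (i : 'I_n) : 'I_n := if (i < p)%N then (d ^+ i) y0 else w.
have gf_inj : injective gf.
  move=> i j; rewrite /gf; case: ifP => ip; case: ifP => jp.
  - by move/(iter_inj hp od dy0 ip jp) => e; apply: val_inj.
  - move=> e; have pn : (p < n)%N.
      by move/negbT: jp; rewrite -leqNgt => jp; apply: leq_ltn_trans jp (ltn_ord j).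
    by have := wS pn; rewrite -e memS.
  - move=> e; have pn : (p < n)%N.
      by move/negbT: ip; rewrite -leqNgt => ip; apply: leq_ltn_trans ip (ltn_ord i).
    by have := wS pn; rewrite e memS.
  - move=> _; apply: ord_inj; move/negbT: ip; move/negbT: jp; rewrite -!leqNgt.
    move: (ltn_ord i) (ltn_ord j) hnp; lia.
pose g := perm gf_inj.
have e : c0 * g = g * d.
  have gE : forall i, g i = gf i by move=> i; rewrite permE.
  apply/permP => z; rewrite !permM !gE /gf.
  have hc := c0X 1 z; rewrite expg1 in hc.
  case: (boolP (z < p)%N) => zp.
  - have h1 : (c0 z < p)%N by rewrite hc zp ltn_pmod // p_gt0.
    rewrite h1 hc zp addn1 -od expg_mod_order.
    by rewrite expgSr permM.
  - have h1 : c0 z = z by apply: ord_inj; rewrite hc (negbTE zp).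
    rewrite h1 (negbTE zp); symmetry; apply: (outfix hp hnp od dy0); apply: wS.
    by rewrite -leqNgt in zp; apply: leq_ltn_trans zp (ltn_ord z).
exists g; by rewrite conjgE e mulKg.
Qed.

Lemma cardE : (#|[set x : G | #[x] == p]| * p)%N = n`!.
Proof.
have -> : [set x : G | #[x] == p] = c0 ^: [set: G].
  apply/setP => x; rewrite inE; apply/eqP/idP.
  - by move=> ox; case: (conj_c0 ox) => g ->; apply: memJ_class; rewrite inE.
  - by case/imsetP => g _ ->; rewrite orderJ ord_c0.
rewrite -index_cent1.
have -> : 'C_[set: G][c0] = <[c0]>.
  apply/setP => x; rewrite inE in_setT /=; apply/idP/idP.
  - by move/cent1P => cx; exact: (cent hp hnp ord_c0 cx).
  - by case/cycleP => m ->; apply/cent1P; rewrite /commute -expgS -expgSr.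
have := Lagrange (subsetT <[c0]>).
by rewrite -orderE ord_c0 cardsT card_Sn mulnC.
Qed.
End C0.

Section RPG2.
Variables (n p : nat).
Hypothesis hp : prime p.
Hypothesis hnp : (n <= p.+1)%N.
Local Notation G := {perm 'I_n}.

Lemma sub_eq1 (u v : G) : <[u]> \subset <[v]> -> #[v] = p -> u != 1 -> <[u]> = <[v]>.
Proof.
move=> s ov u1; have d : (#[u] %| p)%N by rewrite -ov /order cardSg.
case/primeP: hp => _ /(_ _ d) /orP[] /eqP o.
- by move: u1; rewrite -order_eq1 o.
- by apply/eqP; rewrite eqEcard s -!orderE o ov leqnn.
Qed.

Lemma sub_eq2 (u v : G) : <[u]> \subset <[v]> -> #[u] = p -> <[u]> = <[v]>.
Proof.
move=> s ou; have d : (p %| #[v])%N by rewrite -ou /order cardSg.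
have ov := ordp hp hnp d.
by apply/eqP; rewrite eqEcard s -!orderE ou ov leqnn.
Qed.

Lemma clsE (x y : G) : (y \in cls x) = (<[y]> == <[x]>).
Proof. by rewrite inE. Qed.

Lemma cls_eq (x y : G) : <[x]> = <[y]> -> cls x = cls y.
Proof. by move=> e; apply/setP => z; rewrite !clsE e. Qed.

Lemma ne1 (x y : G) : <[y]> = <[x]> -> x != 1 -> y != 1.
Proof. by move=> e; apply: contra => /eqP y1; rewrite -cycle_eq1 -e y1 cycle1. Qed.

Lemma iso (psi : G) : #[psi] = p -> rpg_isolated (cls psi).
Proof.
move=> op; have psi1 : psi != 1 by rewrite -order_eq1 op; apply/eqP => e; move: (prime_gt1 hp); rewrite e.
split; first by apply/imsetP; exists psi; rewrite // !inE.
move=> B; apply/negP; case/and4P => _ /imsetP[x hx ->] ne.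
case/existsP => a /andP[ha /existsP[b /andP[hb hab]]].
rewrite clsE in ha; rewrite clsE in hb; move/eqP: ha => ha; move/eqP: hb => hb.
have x1 : x != 1 by move: hx; rewrite !inE.
have b1 := ne1 hb x1.
have oa : #[a] = p by rewrite /order ha -orderE.
suff e : <[psi]> = <[x]> by move: ne; rewrite (cls_eq e) eqxx.
rewrite -ha -hb; case/orP: hab => h.
- by apply: sub_eq2 => //; rewrite cycle_subG.
- by symmetry; apply: sub_eq1 => //; rewrite cycle_subG.
Qed.
End RPG2.

Lemma adj_sym (gT : finGroupType) : symmetric (@rpg_adj gT).
Proof.
suff h : forall A B : {set gT}, rpg_adj A B -> rpg_adj B A.
  by move=> A B; apply/idP/idP; apply: h.
move=> A B; case/and4P => hA hB ne /existsP[a /andP[ha /existsP[b /andP[hb h]]]].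
apply/and4P; split => //; first by rewrite eq_sym.
apply/existsP; exists b; rewrite hb /=; apply/existsP; exists a; by rewrite ha orbC.
Qed.

Lemma conn_iso (gT : finGroupType) (A B : {set gT}) :
  rpg_isolated A -> connect (@rpg_adj gT) A B -> B = A.
Proof.
case=> _ hA; case/connectP => s; case: s => [_ -> //| b s /= /andP[h _] _].
by move: (hA b); rewrite h.
Qed.

Lemma comp_iso (gT : finGroupType) (A : {set gT}) :
  rpg_isolated A -> [set B | connect (@rpg_adj gT) A B] = [set A].
Proof.
move=> iA; apply/setP => B; rewrite !inE; apply/idP/idP.
- by move/(conn_iso iA) => ->.
- by move/eqP => ->; apply: connect0.
Qed.

Section Count.
Variables (n p : nat).
Hypothesis hp : prime p.
Hypothesis hnp : (n <= p.+1)%N.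
Hypothesis hpn : (p <= n)%N.
Local Notation G := {perm 'I_n}.
Let E := [set x : G | #[x] == p].

Lemma ncomp_eq : rpg_ncomp_order G p = #|[set cls x | x in E]|.
Proof.
have sym := sym_connect_sym (@adj_sym G).
rewrite /rpg_ncomp_order.
have -> : [set C in rpg_components G | [exists x : G, [&& x != 1, #[x] == p & cls x \in C]]]
   = [set [set A] | A in [set cls x | x in E]].
  apply/setP => C; rewrite inE; apply/andP/imsetP.
  - case=> /imsetP[A hA ->] /existsP[x /and3P[x1 /eqP ox hx]].
    rewrite inE in hx; rewrite sym in hx.
    have ix := iso hp hnp ox.
    rewrite (conn_iso ix hx) (comp_iso ix).
    by exists (cls x) => //; apply/imsetP; exists x; rewrite // inE ox.
  - case=> A /imsetP[x hx ->] ->; rewrite inE in hx; move/eqP: hx => ox.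
    have ix := iso hp hnp ox.
    split; first by apply/imsetP; exists (cls x); [case: ix | rewrite comp_iso].
    have x1 : x != 1 by rewrite -order_eq1 ox; apply/eqP => e; move: (prime_gt1 hp); rewrite e.
    by apply/existsP; exists x; rewrite x1 ox eqxx inE eqxx.
rewrite card_imset //; exact: set1_inj.
Qed.

Lemma cls_card (x : G) : #[x] = p -> #|cls x| = p.-1.
Proof.
move=> ox.
have -> : cls x = <[x]> :\ 1.
  apply/setP => y; rewrite clsE !inE; apply/eqP/andP.
  - move=> e; split; last by rewrite -e cycle_id.
    by apply: (ne1 e); rewrite -order_eq1 ox; apply/eqP => e1; move: (prime_gt1 hp); rewrite e1.
  - case=> y1 yx; apply: (sub_eq1 hp _ ox y1); by rewrite cycle_subG.
have := cardsD1 1 <[x]>; rewrite group1 -orderE ox add1n => ->.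
done.
Qed.

Lemma cardE2 : #|E| = (#|[set cls x | x in E]| * p.-1)%N.
Proof.
apply: card_uniform_partition.
  by move=> A /imsetP[x hx ->]; apply: cls_card; move: hx; rewrite inE => /eqP.
apply/and3P; split.
- apply/eqP/setP => z; apply/bigcupP/idP.
  + case=> A /imsetP[x hx ->]; rewrite clsE => /eqP e.
    by move: hx; rewrite !inE /order e.
  + move=> hz; exists (cls z); first by apply/imsetP; exists z.
    by rewrite clsE.
- apply/trivIsetP => A B /imsetP[x _ ->] /imsetP[y _ ->] ne.
  rewrite -setI_eq0; apply/negPn/negP => /set0Pn[z]; rewrite inE !clsE => /andP[/eqP e1 /eqP e2].
  by move: ne; rewrite (cls_eq (etrans (esym e1) e2)) eqxx.
- apply/imsetP => -[x _ e].
  by have := in_set0 x; rewrite e clsE eqxx.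
Qed.

Lemma count_final : (#|[set cls x | x in E]| * p.-1 * p)%N = n`!.
Proof. by rewrite -cardE2 (cardE hp hnp hpn). Qed.
End Count.

Close Scope group_scope.
Lemma path_nseq (m x : nat) : path geq x (nseq m x).
Proof. by elim: m => //= m ->; rewrite leqnn. Qed.

Lemma sorted_nseq (m x : nat) : sorted geq (nseq m x).
Proof. by case: m => //= m; apply: path_nseq. Qed.

Lemma geq_trans : transitive geq.
Proof. by move=> a b c /= h1 h2; apply: leq_trans h2 h1. Qed.

Lemma geq_anti : antisymmetric geq.
Proof. by move=> a b /= /andP[h1 h2]; apply/eqP; rewrite eqn_leq h1 h2. Qed.

Lemma pos_sum1 (s : seq nat) k : all (fun m => 0 < m) s -> sumn s = k -> k <= 1 -> s = nseq k 1.
Proof.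
case: s => [|x s] /=; first by move=> _ <-.
case/andP => x0 hs e k1.
case: s hs e => [|y s] /=.
- by move=> _; rewrite addn0 => ex; move: x0 k1; rewrite ex; case: k ex => [|[|]].
- by case/andP => y0 _ e; move: x0 y0 k1; rewrite -e; lia.
Qed.

Section TG.
Variables (p k : nat).
Hypothesis hp : prime p.
Hypothesis hk : k <= 1.
Let T := p :: nseq k 1.

Lemma sortedT : sorted geq T.
Proof. rewrite /T; case: k hk => [|[|]] //= _; rewrite andbT prime_gt0 //. Qed.

Lemma sumT : sumn T = p + k.
Proof. rewrite /T; case: k hk => [|[|]] //= _; by rewrite ?addn0. Qed.

Lemma tpowT a : tpow T a = T \/ tpow T a = nseq (p + k) 1.
Proof.
rewrite /tpow /T /= map_nseq gcdn1 divn1.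
have fl : flatten (nseq k [:: 1]) = nseq k 1 by case: k hk => [|[|]].
rewrite fl.
have d : gcdn a p %| p by apply: dvdn_gcdr.
case/primeP: hp => _ /(_ _ d) /orP[] /eqP ->.
- by left; rewrite divn1 /=; apply: sorted_sort; [exact: geq_trans | exact: sortedT].
- right; rewrite divnn prime_gt0 // -nseqD; apply: sorted_sort; [exact: geq_trans | exact: sorted_nseq].
Qed.

Lemma tg_iso : tg_isolated (p + k) T.
Proof.
have p1 := prime_gt1 hp.
have vT : tg_vertex (p + k) T.
  split.
    split; first exact: sortedT.
    split; last exact: sumT.
    by rewrite /T /= prime_gt0 //= all_nseq orbT.
  have -> : p + k = (p.-1 + k).+1 by move: p1; lia.
  by move=> [e]; move: p1; rewrite e.
split => // T' [[sT' [pT' sumT']] ne1] [ne [[a e]|[a e]]].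
- by case: (tpowT a) => h; [apply: ne; rewrite e h | apply: ne1; rewrite e h].
- apply: ne.
  have pin : p \in tpow T' a by rewrite -e /T inE eqxx.
  rewrite /tpow mem_sort in pin.
  case/flattenP: pin => s /mapP[m mT' ->]; rewrite mem_nseq => /andP[g0 /eqP pm].
  have m0 : 0 < m by move/allP: pT' => /(_ m mT').
  have pT2 := perm_to_rem mT'.
  have sm := perm_sumn pT2; rewrite /= sumT' in sm.
  have dg : gcdn a m %| m by apply: dvdn_gcdr.
  have em : m = p * gcdn a m by rewrite pm divnK.
  have le : m <= p + k by rewrite sm leq_addr.
  have g1 : gcdn a m = 1.
    move: le; rewrite {1}em; move: g0 hk; clear -p1; move: (gcdn a m) => g.
    case: g => [|[|g]] //= _ hk2 sm.
    have : p * 2 <= p * g.+2 by rewrite leq_mul2l ltnS ltnS leq0n orbT.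
    move: sm hk2 p1; lia.
  move: em; rewrite g1 muln1 => em; subst m.
  have ers : rem p T' = nseq k 1.
    apply: pos_sum1 => //; last by move: sm; lia.
    by apply/allP => x /mem_rem; move/allP: pT'; apply.
  apply: (sorted_eq geq_trans geq_anti).
  - exact: sortedT.
  - exact: sT'.
  - by rewrite /T -ers perm_sym.
Qed.
End TG.

Theorem lemma7p3 (n p : nat) (hp : prime p) (hn : 2 <= n)
    (hnp : n = p \/ n = p.+1) :
  (og_isolated {perm 'I_n} p /\
   tg_isolated n (p :: nseq (n - p) 1)) /\
  (forall psi : {perm 'I_n}, #[psi]%g = p -> rpg_isolated (cls psi)) /\
  (n = p -> rpg_ncomp_order {perm 'I_n} p = (p - 2)`!) /\
  (n = p.+1 -> rpg_ncomp_order {perm 'I_n} p = p.+1 * (p - 2)`!).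
Proof.
have h1 : n <= p.+1 by case: hnp => ->.
have h2 : p <= n by case: hnp => ->.
have p1 := prime_gt1 hp.
split; [split|split; [|split]].
- split.
    split; first by exists (c0 hp h1 h2); exact: ord_c0.
    by move=> e; move: p1; rewrite e.
  move=> m [[b ob] m1] [ne [pd|dp]].
  + by apply: ne; rewrite -ob (ordp hp h1) // ob.
  + by case/primeP: hp => _ /(_ _ dp) /orP[] /eqP e; [apply: m1 | apply: ne].
- have := @tg_iso p (n - p) hp; rewrite subnKC //; apply; move: h1; lia.
- by move=> psi; apply: iso.
- move=> e; rewrite (ncomp_eq hp h1).
  have h := count_final hp h1 h2; move: h; rewrite e.
  move: (#|_|) => c; case: p p1 {hp h1 h2 e hnp hn} => [|[|q]] // _ h.
  rewrite subSS subSS subn0; apply/eqP; rewrite -(eqn_pmul2r (_ : 0 < q.+1 * q.+2)) //.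
  apply/eqP; rewrite mulnA /= h !factS; lia.
- move=> e; rewrite (ncomp_eq hp h1).
  have h := count_final hp h1 h2; move: h; rewrite e.
  move: (#|_|) => c; case: p p1 {hp h1 h2 e hnp hn} => [|[|q]] // _ h.
  rewrite subSS subSS subn0; apply/eqP; rewrite -(eqn_pmul2r (_ : 0 < q.+1 * q.+2)) //.
  apply/eqP; rewrite mulnA /= h !factS; lia.
Qed.
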